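(* Let $p$ be the POP of length 4 defined by the relations $1>2$ and $1>4$ (label $3$ isolated), and let $a(n)=|S_n(p)|$. Then $$\sum_{n\geq 0}a(n)x^n=\frac{(1-x)^2}{1-3x+2x^2-2x^3}.$$
   Context: An $n$-permutation is a word $\pi=\pi_1\cdots\pi_n$ containing each of $1,\ldots,n$ exactly once; $S_n$ is the set of $n$-permutations ($S_0$ consists of the empty permutation). A partially ordered pattern (POP) $p$ of length $k$ is a partial order on the label set $\{1,\ldots,k\}$; it is described by a set of generating relations, where a relation $x>y$ means that in an occurrence the entry in the $x$-th chosen position must be larger than the entry in the $y$-th chosen position, and labels not involved in any relation are unconstrained. An $n$-permutation $\pi$ contains $p$ if there are indices $1\leq i_1<\cdots<i_k\leq n$ such that $\pi_{i_x}>\pi_{i_y}$ whenever $x>y$ in the partial order; otherwise $\pi$ avoids $p$. $S_n(p)$ denotes the set of $n$-permutations avoiding $p$. *)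

(* Defs.v *)
From HB Require Import structures.
From mathcomp Require Import all_boot all_order all_algebra all_fingroup.
Set Implicit Arguments. Unset Strict Implicit. Unset Printing Implicit Defensive.
Import GRing.Theory.
Local Open Scope ring_scope.

(* An n-permutation pi = pi_1 ... pi_n is represented by s : {perm 'I_n},
   with pi_{i+1} = s i + 1 (0-based positions and values). *)

Definition contains_pop1214 (n : nat) (s : {perm 'I_n}) : bool :=
  [exists i1 : 'I_n, exists i2 : 'I_n, exists i3 : 'I_n, exists i4 : 'I_n,
     [&& (i1 < i2)%N, (i2 < i3)%N, (i3 < i4)%N,
         (s i2 < s i1)%N & (s i4 < s i1)%N]].

Definition a_pop (n : nat) : nat :=
  #|[set s : {perm 'I_n} | ~~ contains_pop1214 s]|.

(* The generating function sum_n a(n) x^n as a formal power series over int,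
   represented by its coefficient sequence. *)
Definition gf_a : nat -> int := fun n => Posz (a_pop n).

Definition num_poly : {poly int} := ('X - 1) ^+ 2.
Definition den_poly : {poly int} := 1 - 3%:R *: 'X + 2%:R *: 'X^2 - 2%:R *: 'X^3.

Definition fps_mul_poly_coef (f : nat -> int) (q : {poly int}) (n : nat) : int :=
  \sum_(k < n.+1) f k * q`_(n - k).

(* Main.v *)
Require Import Defs.
From HB Require Import structures.
From mathcomp Require Import all_boot all_order all_algebra all_fingroup.
From mathcomp Require Import zify.
Set Implicit Arguments. Unset Strict Implicit. Unset Printing Implicit Defensive.

Definition Sn n (Q : {perm 'I_n} -> bool) : nat := \sum_(s : {perm 'I_n}) (Q s : nat).

Definition Fl n (x : 'I_n.+1 * {perm 'I_n}) : {perm 'I_n.+1} := lift_perm ord0 x.1 x.2.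

Lemma Fl_inj n : injective (@Fl n).
Proof.
move=> [v1 t1] [v2 t2]; rewrite /Fl /= => E.
have Ev : v1 = v2 by rewrite -(lift_perm_id ord0 v1 t1) E lift_perm_id.
subst v2; congr (_, _); apply/permP => k.
have := congr1 (fun s : {perm 'I_n.+1} => s (lift ord0 k)) E.
by rewrite /= !lift_perm_lift => /lift_inj.
Qed.

Lemma Sn_split n (Q : {perm 'I_n.+1} -> bool) :
  Sn Q = \sum_(v < n.+1) Sn (fun t => Q (lift_perm ord0 v t)).
Proof.
rewrite /Sn pair_bigA /=.
have bij : bijective (@Fl n).
  apply: inj_card_bij; first exact: Fl_inj.
  by rewrite card_prod card_ord !card_Sn factS.
by rewrite (reindex (@Fl n)) //; apply: onW_bij.
Qed.

Lemma a_popE n : a_pop n = Sn (fun s : {perm 'I_n} => ~~ contains_pop1214 s).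
Proof.
rewrite /a_pop /Sn -sum1_card big_mkcond /=.
by apply: eq_bigr => s _; rewrite inE; case: (~~ _).
Qed.

Definition E3 n (P : 'I_n -> bool) : bool :=
  [exists k2 : 'I_n, exists k3 : 'I_n, exists k4 : 'I_n,
     [&& (k2 < k3)%N, (k3 < k4)%N, P k2 & P k4]].

Lemma E3P n (P : 'I_n -> bool) :
  reflect (exists k2 k4 : 'I_n, [/\ (k2.+1 < k4)%N, P k2 & P k4]) (E3 P).
Proof.
apply: (iffP idP).
  case/existsP=> k2 /existsP [k3 /existsP [k4 /and4P [h1 h2 h3 h4]]].
  by exists k2, k4; split => //; lia.
case=> k2 [k4 [h1 h2 h3]]; apply/existsP; exists k2.
have lt : (k2.+1 < n)%N by have := ltn_ord k4; lia.
apply/existsP; exists (Ordinal lt); apply/existsP; exists k4.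
by rewrite /= h2 h3 h1 leqnn.
Qed.

Lemma eq_E3 n (P Q : 'I_n -> bool) : P =1 Q -> E3 P = E3 Q.
Proof.
move=> H; apply/E3P/E3P => -[k2 [k4 [h1 h2 h3]]]; exists k2, k4.
  by rewrite -!H.
by rewrite !H.
Qed.

Lemma eq_E3_imp n (P Q : 'I_n -> bool) : P =1 Q -> E3 P -> E3 Q.
Proof. by move=> H; rewrite (eq_E3 H). Qed.

Lemma E3_split n (P : 'I_n.+1 -> bool) :
  E3 P = (P ord0 && [exists k : 'I_n, (0 < k)%N && P (lift ord0 k)])
         || E3 (fun k => P (lift ord0 k)).
Proof.
apply/E3P/orP.
  case=> k2 [k4 [h1 h2 h3]].
  case: (unliftP ord0 k4) h1 h3 => [j4 ->|->] h1 h3; last by rewrite ltn0 in h1.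
  case: (unliftP ord0 k2) h1 h2 => [j2 ->|->] h1 h2.
    by right; apply/E3P; exists j2, j4; rewrite !lift0 in h1; split.
  left; rewrite h2 /=; apply/existsP; exists j4; rewrite h3 andbT.
  by rewrite lift0 in h1.
case.
  case/andP=> h0 /existsP [k /andP [hk hP]].
  by exists ord0, (lift ord0 k); rewrite lift0 /=; split.
case/E3P=> k2 [k4 [h1 h2 h3]].
by exists (lift ord0 k2), (lift ord0 k4); rewrite !lift0; split.
Qed.

Definition R1 n (s : {perm 'I_n}) (i1 : 'I_n) := fun j : 'I_n => (i1 < j)%N && (s j < s i1)%N.

Lemma contE n (s : {perm 'I_n}) :
  contains_pop1214 s = [exists i1, E3 (R1 s i1)].
Proof.
apply/existsP/existsP => -[i1 H]; exists i1.
  move: H => /existsP [i2 /existsP [i3 /existsP [i4 /and5P [h1 h2 h3 h4 h5]]]].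
  apply/E3P; exists i2, i4; rewrite /R1 h1 h4 h5; split => //; lia.
move/E3P: H => [k2 [k4 [h1 /andP [h2 h3] /andP [h4 h5]]]].
apply/existsP; exists k2.
have lt : (k2.+1 < n)%N by have := ltn_ord k4; lia.
apply/existsP; exists (Ordinal lt); apply/existsP; exists k4.
by rewrite /= h2 h3 h5 h1 leqnn.
Qed.

Definition badC n (v : nat) (t : {perm 'I_n}) := E3 (fun k => (t k < v)%N).

Lemma lift_ltn n (v : 'I_n.+1) (x y : 'I_n) : (lift v x < lift v y)%N = (x < y)%N.
Proof. rewrite /= /bump; case: (leqP v x); case: (leqP v y) => /= ? ?; lia. Qed.

Lemma lift_ltv n (v : 'I_n.+1) (x : 'I_n) : (lift v x < v)%N = (x < v)%N.
Proof. rewrite /= /bump; case: (leqP v x) => /= ?; lia. Qed.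

Lemma cont_lift n (v : 'I_n.+1) (t : {perm 'I_n}) :
  contains_pop1214 (lift_perm ord0 v t) = badC v t || contains_pop1214 t.
Proof.
rewrite !contE; apply/existsP/orP.
  case=> i1; case: (unliftP ord0 i1) => [j1 ->|->].
    rewrite E3_split /R1 ltn0 andFb orFb => H; right; apply/existsP; exists j1.
    apply: (eq_E3_imp _ H) => k.
    by rewrite !lift_perm_lift !lift_ltn.
  rewrite E3_split /R1 ltnn andFb orFb => H; left; apply: (eq_E3_imp _ H) => k.
  by rewrite lift_perm_lift lift_perm_id lift_ltv.
case.
  move=> H; exists ord0; rewrite E3_split /R1 ltnn andFb orFb.
  apply: (eq_E3_imp _ H) => k.
  by rewrite lift_perm_lift lift_perm_id lift_ltv.
case/existsP=> j1 H; exists (lift ord0 j1).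
rewrite E3_split /R1 ltn0 andFb orFb; apply: (eq_E3_imp _ H) => k.
by rewrite !lift_perm_lift !lift_ltn.
Qed.

Lemma eq_Sn n (P Q : {perm 'I_n} -> bool) : P =1 Q -> Sn P = Sn Q.
Proof. by move=> H; apply: eq_bigr => s _; rewrite H. Qed.

Lemma Sn0 n (P : {perm 'I_n} -> bool) : P =1 xpred0 -> Sn P = 0.
Proof. by move=> H; rewrite /Sn big1 // => s _; rewrite H. Qed.

Lemma badC0 n (t : {perm 'I_n}) : badC 0 t = false.
Proof. by apply/E3P => -[k2 [k4 [_ h _]]]. Qed.

Lemma badC1 n (t : {perm 'I_n}) : badC 1 t = false.
Proof.
apply/E3P => -[k2 [k4 [h1 h2 h3]]].
have : t k2 = t k4 by apply: val_inj; rewrite /=; lia.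
by move/perm_inj => E; rewrite E in h1; lia.
Qed.

Lemma close n (P : 'I_n -> bool) i j :
  ~~ E3 P -> P i -> P j -> (i < j)%N -> j = i.+1 :> nat.
Proof.
move=> /E3P H hi hj hij; case: (ltnP i.+1 j) => h; last by lia.
by case: H; exists i, j.
Qed.

Lemma close2 n (P : 'I_n -> bool) i j :
  ~~ E3 P -> P i -> P j -> i != j -> (i <= j.+1)%N && (j <= i.+1)%N.
Proof.
move=> H hi hj /eqP hne; case: (ltngtP i j) => h.
- by have := close H hi hj h; lia.
- by have := close H hj hi h; lia.
- by case: hne; apply: val_inj.
Qed.

Lemma badC_ge3 n (v : nat) (t : {perm 'I_n}) : (3 <= v)%N -> (v <= n)%N -> badC v t.
Proof.
case: n t => [|m] t h3 hn; first lia.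
apply: contraT => H.
pose p (k : nat) := (t^-1)%g (inord k : 'I_m.+1).
have tp : forall k, (k <= m)%N -> nat_of_ord (t (p k)) = k.
  by move=> k hk; rewrite /p permKV inordK.
have Pp : forall k, (k < 3)%N -> (t (p k) < v)%N.
  by move=> k hk; rewrite tp; lia.
have dp : forall i j, (i < 3)%N -> (j < 3)%N -> i != j -> p i != p j.
  move=> i j hi hj; apply: contra => /eqP E.
  by have := congr1 (fun x => nat_of_ord (t x)) E; rewrite /= !tp //; try lia; move=> ->.
have c01 := close2 H (Pp 0 erefl) (Pp 1 erefl) (dp 0 1 erefl erefl erefl).
have c02 := close2 H (Pp 0 erefl) (Pp 2 erefl) (dp 0 2 erefl erefl erefl).
have c12 := close2 H (Pp 1 erefl) (Pp 2 erefl) (dp 1 2 erefl erefl erefl).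
have n01 := dp 0 1 erefl erefl erefl.
have n02 := dp 0 2 erefl erefl erefl.
have n12 := dp 1 2 erefl erefl erefl.
move: n01 n02 n12; rewrite -!(inj_eq val_inj) /=.
move: c01 c02 c12; set a := nat_of_ord (p 0); set b := nat_of_ord (p 1);
  set c := nat_of_ord (p 2); lia.
Qed.

Definition Aa n := Sn (fun t : {perm 'I_n} => ~~ contains_pop1214 t).
Definition Bb n := Sn (fun t : {perm 'I_n} => ~~ contains_pop1214 t && ~~ badC 2 t).

Definition TA n (v : 'I_n.+1) :=
  Sn (fun t : {perm 'I_n} => ~~ contains_pop1214 (lift_perm ord0 v t)).

Lemma A_split n : Aa n.+1 = \sum_(v < n.+1) TA v.
Proof. by rewrite /Aa Sn_split. Qed.

Lemma TA_lt2 n (v : 'I_n.+1) : (v < 2)%N -> TA v = Aa n.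
Proof.
move=> h; apply: eq_Sn => t; rewrite cont_lift.
have -> : badC v t = false.
  by case: (nat_of_ord v) h => [|[|]] // _; rewrite ?badC0 ?badC1.
done.
Qed.

Lemma TA_2 n (v : 'I_n.+1) : nat_of_ord v = 2 -> TA v = Bb n.
Proof. by move=> h; apply: eq_Sn => t; rewrite cont_lift h negb_or andbC. Qed.

Lemma TA_ge3 n (v : 'I_n.+1) : (3 <= v)%N -> TA v = 0.
Proof.
move=> h; apply: Sn0 => t; rewrite cont_lift badC_ge3 //.
by have := ltn_ord v; lia.
Qed.

Definition TB n (v : 'I_n.+1) :=
  Sn (fun t : {perm 'I_n} => ~~ contains_pop1214 (lift_perm ord0 v t)
                             && ~~ badC 2 (lift_perm ord0 v t)).

Lemma B_split n : Bb n.+1 = \sum_(v < n.+1) TB v.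
Proof. by rewrite /Bb Sn_split. Qed.

Lemma lift_lt2 n (v : 'I_n.+1) (x : 'I_n) :
  (lift v x < 2)%N = if (v < 2)%N then (x < 1)%N else (x < 2)%N.
Proof. rewrite /= /bump; case: (leqP v x); case: ifP => /= ? ?; lia. Qed.

Lemma badC2_lift n (v : 'I_n.+1) (t : {perm 'I_n}) :
  badC 2 (lift_perm ord0 v t) =
  if (v < 2)%N then [exists k : 'I_n, (0 < k)%N && (t k < 1)%N] else badC 2 t.
Proof.
rewrite /badC E3_split lift_perm_id.
case: ifP => h.
  rewrite andTb.
  have -> : E3 (fun k => (lift_perm ord0 v t (lift ord0 k) < 2)%N) = false.
    rewrite -(badC1 t); apply: eq_E3 => k; by rewrite lift_perm_lift lift_lt2 h.
  rewrite orbF; apply: eq_existsb => k; by rewrite lift_perm_lift lift_lt2 h.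
rewrite andFb orFb; apply: eq_E3 => k; by rewrite lift_perm_lift lift_lt2 h.
Qed.

Lemma first0 m (t : {perm 'I_m.+1}) :
  ~~ [exists k : 'I_m.+1, (0 < k)%N && (t k < 1)%N] = (t ord0 < 1)%N.
Proof.
apply/idP/idP.
  apply: contraR => h; apply/existsP; exists ((t^-1)%g ord0).
  rewrite permKV /= andbT lt0n; apply: contra h => /eqP h0.
  have -> : ord0 = (t^-1)%g ord0 by apply: val_inj; rewrite /= h0.
  by rewrite permKV.
move=> h; apply/existsP => -[k /andP [hk hk1]].
have : t k = t ord0 by apply: val_inj; rewrite /=; lia.
by move/perm_inj => E; rewrite E in hk.
Qed.

Lemma Sfirst0 m : Sn (fun t : {perm 'I_m.+1} => ~~ contains_pop1214 t && (t ord0 < 1)%N) = Aa m.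
Proof.
rewrite Sn_split big_ord_recl big1 ?addn0.
  apply: eq_Sn => u; rewrite cont_lift badC0 lift_perm_id /= andbT; done.
move=> i _; apply: Sn0 => u; rewrite lift_perm_id /= andbF //.
Qed.

Lemma TB_lt2 m (v : 'I_m.+2) : (v < 2)%N -> TB v = Aa m.
Proof.
move=> h; rewrite -Sfirst0; apply: eq_Sn => t.
rewrite badC2_lift h cont_lift first0.
have -> : badC v t = false.
  by case: (nat_of_ord v) h => [|[|]] // _; rewrite ?badC0 ?badC1.
done.
Qed.

Lemma TB_2 n (v : 'I_n.+1) : nat_of_ord v = 2 -> TB v = Bb n.
Proof.
move=> h; apply: eq_Sn => t; rewrite badC2_lift h /= cont_lift h.
by rewrite negb_or; case: (badC 2 t); case: (contains_pop1214 t).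
Qed.

Lemma TB_ge3 n (v : 'I_n.+1) : (3 <= v)%N -> TB v = 0.
Proof.
move=> h; apply: Sn0 => t; rewrite cont_lift badC_ge3 //.
by have := ltn_ord v; lia.
Qed.

Lemma Aa0 : Aa 0 = 1.
Proof.
rewrite /Aa /Sn (eq_bigr (fun _ => 1)); last first.
  by move=> s _; have -> : contains_pop1214 s = false by apply/existsP => -[[]].
by rewrite sum_nat_const card_Sn.
Qed.

Lemma Aa1 : Aa 1 = Aa 0.
Proof. by rewrite A_split big_ord_recl big_ord0 addn0 TA_lt2. Qed.

Lemma Aa2 : Aa 2 = 2 * Aa 1.
Proof. rewrite A_split !big_ord_recl big_ord0 addn0 !TA_lt2 //; lia. Qed.

Lemma Aa3 m : Aa m.+3 = 2 * Aa m.+2 + Bb m.+2.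
Proof.
rewrite A_split !big_ord_recl big1 ?addn0.
  rewrite [TA ord0]TA_lt2 // [TA (lift ord0 ord0)]TA_lt2 // TA_2 //; lia.
move=> i _; apply: TA_ge3; rewrite /= /bump /=; lia.
Qed.

Lemma Bb2 : Bb 2 = 2 * Aa 0.
Proof. rewrite B_split !big_ord_recl big_ord0 addn0 !TB_lt2 //; lia. Qed.

Lemma Bb3 m : Bb m.+3 = 2 * Aa m.+1 + Bb m.+2.
Proof.
rewrite B_split !big_ord_recl big1 ?addn0.
  rewrite [TB ord0]TB_lt2 // [TB (lift ord0 ord0)]TB_lt2 // TB_2 //; lia.
move=> i _; apply: TB_ge3; rewrite /= /bump /=; lia.
Qed.

Lemma Arec m : (Aa m.+3 + 2 * Aa m.+1 = 3 * Aa m.+2 + 2 * Aa m)%N.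
Proof.
case: m => [|k].
  rewrite Aa3 Bb2 Aa2 Aa1; lia.
rewrite Aa3 Bb3 (Aa3 k); lia.
Qed.
Import GRing.Theory.
Local Open Scope ring_scope.

Definition dd (i : nat) : int :=
  match i with 0 => 1 | 1 => -3 | 2 => 2 | 3 => -2 | _ => 0 end.

Lemma den_coef i : den_poly`_i = dd i.
Proof.
rewrite /den_poly !coefD !coefN !coefZ coef1 coefX !coefXn.
by case: i => [|[|[|[|i]]]] //=; rewrite ?mulr0 ?subr0 ?add0r ?addr0 ?mulr1.
Qed.

Lemma num_coef i : num_poly`_i = match i with 0 => 1 | 1 => -2 | 2 => 1 | _ => 0 end.
Proof.
rewrite /num_poly sqrrB expr1n mulr1 coefD coefB coefMn coefX coefXn coef1.
by case: i => [|[|[|i]]].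
Qed.

Lemma gfE n : gf_a n = Posz (Aa n).
Proof. by rewrite /gf_a a_popE. Qed.

Theorem theorem3p8 :
  forall n : nat, fps_mul_poly_coef gf_a den_poly n = num_poly`_n.
Proof.
move=> n; rewrite /fps_mul_poly_coef (reindex_inj rev_ord_inj) /=.
rewrite (eq_bigr (fun i : 'I_n.+1 => gf_a (n - i)%N * dd i)); last first.
  by move=> i _; rewrite subSS subKn ?den_coef // -ltnS.
rewrite num_coef.
case: n => [|[|[|m]]].
- by rewrite big_ord_recl big_ord0 !gfE Aa0.
- by rewrite !big_ord_recl big_ord0 /= !gfE Aa1 Aa0.
- by rewrite !big_ord_recl big_ord0 /= !gfE Aa2 Aa1 Aa0.
rewrite !big_ord_recl big1 /=; last by move=> i _; rewrite mulr0.
rewrite (_ : bump 0 0 = 1%N) // (_ : bump 0 1 = 2%N) // (_ : bump 0 2 = 3%N) //.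
rewrite !subSS !subn0 !gfE.
have := Arec m; lia.
Qed.
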